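(* Let $\mathfrak g\xrightarrow{\mu}\mathfrak h$ be a crossed module of Lie algebras with action $\mathcal L$. Let $\omega\in\bigwedge^2\mathfrak h^*$ and $\varphi\in(\mathfrak g\oplus\mathfrak h)^*$ satisfy: (1) $-\omega([y_0,y_1],y_2)+\omega([y_0,y_2],y_1)-\omega([y_1,y_2],y_0)=0$ for all $y_0,y_1,y_2\in\mathfrak h$; (2) $\varphi(x_2,y)-\varphi(x_1+x_2,y)+\varphi(x_1,y+\mu(x_2))=0$ for all $x_1,x_2\in\mathfrak g$, $y\in\mathfrak h$; (3) $\omega(y_0,y_1)-\omega(y_0+\mu(x_0),y_1+\mu(x_1))=\varphi([(x_0,y_0),(x_1,y_1)]_{\mathcal L})$ for all $(x_0,y_0),(x_1,y_1)\in\mathfrak g\oplus\mathfrak h$. Let $\mathfrak h\oplus^\omega\mathbb R$ be $\mathfrak h\oplus\mathbb R$ with bracket $[(y_0,\lambda_0),(y_1,\lambda_1)]_\omega=([y_0,y_1],-\omega(y_0,y_1))$. Then $$\mu_\varphi:\mathfrak g\to\mathfrak h\oplus^\omega\mathbb R,\qquad x\mapsto(\mu(x),\varphi(x,0)),$$ together with the action $\mathcal L_{(y,\lambda)}x:=\mathcal L_yx$, is a crossed module of Lie algebras.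
   Context: A crossed module of Lie algebras consists of Lie algebras $\mathfrak g,\mathfrak h$, a Lie algebra homomorphism $\mu:\mathfrak g\to\mathfrak h$ and a Lie algebra homomorphism $\mathcal L:\mathfrak h\to\mathrm{Der}(\mathfrak g)$, $y\mapsto\mathcal L_y$, such that $\mu(\mathcal L_yx)=[y,\mu(x)]$ and $\mathcal L_{\mu(x_0)}x_1=[x_0,x_1]$. The bracket $[\cdot,\cdot]_{\mathcal L}$ on $\mathfrak g\oplus\mathfrak h$ is $[(x_0,y_0),(x_1,y_1)]_{\mathcal L}=([x_0,x_1]+\mathcal L_{y_0}x_1-\mathcal L_{y_1}x_0,[y_0,y_1])$. Conditions (1)–(3) express that $(\omega,\varphi)$ is a 2-cocycle in the total complex of the double complex of the Lie 2-algebra (with trivial real coefficients). *)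

(* Defs.v *)
From HB Require Import structures.
From mathcomp Require Import all_boot all_order all_algebra.
From mathcomp Require Import reals.
Set Implicit Arguments. Unset Strict Implicit. Unset Printing Implicit Defensive.
Import Order.TTheory GRing.Theory Num.Theory.
Local Open Scope ring_scope.

Section LieDefs.
Variable R : realType.

Definition is_lie_bracket (V : lmodType R) (br : V -> V -> V) : Prop :=
  [/\ (forall (a : R) (u v w : V), br (a *: u + v) w = a *: br u w + br v w),
      (forall (a : R) (u v w : V), br w (a *: u + v) = a *: br w u + br w v),
      (forall u : V, br u u = 0) &
      (forall u v w : V, br u (br v w) + br v (br w u) + br w (br u v) = 0)].

Definition is_crossed_module (g h : lmodType R)
  (brg : g -> g -> g) (brh : h -> h -> h)
  (mu : g -> h) (L : h -> g -> g) : Prop :=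
  is_lie_bracket brg /\ is_lie_bracket brh /\
      (forall (a : R) (x x' : g), mu (a *: x + x') = a *: mu x + mu x') /\
      (forall x x' : g, mu (brg x x') = brh (mu x) (mu x')) /\
      (forall (a : R) (y y' : h) (x : g), L (a *: y + y') x = a *: L y x + L y' x) /\
      (forall (y : h) (a : R) (x x' : g), L y (a *: x + x') = a *: L y x + L y x') /\
      (forall (y : h) (x x' : g), L y (brg x x') = brg (L y x) x' + brg x (L y x')) /\
      (forall (y y' : h) (x : g), L (brh y y') x = L y (L y' x) - L y' (L y x)) /\
      (forall (y : h) (x : g), mu (L y x) = brh y (mu x)) /\
      (forall x0 x1 : g, L (mu x0) x1 = brg x0 x1).

Definition semidirect_bracket (g h : lmodType R)
  (brg : g -> g -> g) (brh : h -> h -> h) (L : h -> g -> g)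
  (p q : (g * h)%type) : (g * h)%type :=
  (brg p.1 q.1 + L p.2 q.1 - L q.2 p.1, brh p.2 q.2).

Definition omega_bracket (h : lmodType R) (brh : h -> h -> h)
  (omega : h -> h -> R) (p q : (h * R^o)%type) : (h * R^o)%type :=
  (brh p.1 q.1, - omega p.1 q.1).

Definition mu_phi (g h : lmodType R) (mu : g -> h) (phi : (g * h)%type -> R)
  (x : g) : (h * R^o)%type := (mu x, phi (x, 0)).

Definition omega_action (g h : lmodType R) (L : h -> g -> g)
  (p : (h * R^o)%type) (x : g) : g := L p.1 x.

End LieDefs.

(* Main.v *)
Require Import Defs.
From HB Require Import structures.
From mathcomp Require Import all_boot all_order all_algebra.
From mathcomp Require Import reals.
From mathcomp Require Import lra.
Import Order.TTheory GRing.Theory Num.Theory.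
Local Open Scope ring_scope.

Section Helpers.
Context {R : realType}.

Lemma lin_D {V W : lmodType R} {f : V -> W} :
  (forall a u v, f (a *: u + v) = a *: f u + f v) -> forall u v, f (u + v) = f u + f v.
Proof. by move=> H u v; have := H 1 u v; rewrite !scale1r. Qed.

Lemma lin_0 {V W : lmodType R} {f : V -> W} :
  (forall a u v, f (a *: u + v) = a *: f u + f v) -> f 0 = 0.
Proof.
move=> H; have := lin_D H 0 0; rewrite addr0 => /(congr1 (fun z => z - f 0)).
by rewrite addrK subrr.
Qed.

Lemma lin_N {V W : lmodType R} {f : V -> W} :
  (forall a u v, f (a *: u + v) = a *: f u + f v) -> forall u, f (- u) = - f u.
Proof.
move=> H u; have := H (-1) u 0; rewrite addr0 (lin_0 H) addr0 !scaleN1r //.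
Qed.

Lemma antisym {V W : lmodType R} {b : V -> V -> W} :
  (forall a u v w, b (a *: u + v) w = a *: b u w + b v w) ->
  (forall a u v w, b w (a *: u + v) = a *: b w u + b w v) ->
  (forall u, b u u = 0) -> forall u v, b u v = - b v u.
Proof.
move=> Hl Hr Ha u v.
have := Ha (u + v).
have HlD : forall w, (forall a u v, b (a *: u + v) w = a *: b u w + b v w) by move=> w a' u' v'; apply: Hl.
have HrD : forall w, (forall a u v, b w (a *: u + v) = a *: b w u + b w v) by move=> w a' u' v'; apply: Hr.
rewrite (lin_D (HlD _)) !(lin_D (HrD u)) !(lin_D (HrD v)) !Ha add0r addr0.
by move/eqP; rewrite addr_eq0 => /eqP.
Qed.
End Helpers.

Theorem mainTheorem15 (R : realType) (g h : lmodType R)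
  (brg : g -> g -> g) (brh : h -> h -> h) (mu : g -> h) (L : h -> g -> g)
  (omega : h -> h -> R) (phi : (g * h)%type -> R) :
  is_crossed_module brg brh mu L ->
  (* omega is an alternating bilinear form on h *)
  (forall (a : R) (u v w : h), omega (a *: u + v) w = a * omega u w + omega v w) ->
  (forall (a : R) (u v w : h), omega w (a *: u + v) = a * omega w u + omega w v) ->
  (forall u : h, omega u u = 0) ->
  (* phi is a linear form on g (+) h *)
  (forall (a : R) (p q : (g * h)%type), phi (a *: p + q) = a * phi p + phi q) ->
  (* (1) *)
  (forall y0 y1 y2 : h,
     - omega (brh y0 y1) y2 + omega (brh y0 y2) y1 - omega (brh y1 y2) y0 = 0) ->
  (* (2) *)
  (forall (x1 x2 : g) (y : h),
     phi (x2, y) - phi (x1 + x2, y) + phi (x1, y + mu x2) = 0) ->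
  (* (3) *)
  (forall (x0 x1 : g) (y0 y1 : h),
     omega y0 y1 - omega (y0 + mu x0) (y1 + mu x1)
       = phi (semidirect_bracket brg brh L (x0, y0) (x1, y1))) ->
  is_crossed_module brg (omega_bracket brh omega) (mu_phi mu phi) (omega_action L).
Proof.
move=> [Lg [Lh [muL [muB [LL [LR [LD [LB [Leq Lp]]]]]]]]] oL oR oA phL H1 H2 H3.
have Lh' := Lh; case: Lh' => bL bR bA bJ.
have Lg' := Lg; case: Lg' => gL gR gA gJ.
have oL' : forall a (u v w : h), omega (a *: u + v) w = a *: (omega u w : R^o) + omega v w.
  by move=> *; apply: oL.
have oR' : forall a (u v w : h), omega w (a *: u + v) = a *: (omega w u : R^o) + omega w v.
  by move=> *; apply: oR.
have oanti := @antisym R h R^o omega oL' oR' oA.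
have banti := antisym bL bR bA.
have L0 : forall x, L 0 x = 0.
  by move=> x; apply: (lin_0 (fun a u v => LL a u v x)).
have Lx0 : forall y, L y 0 = 0 by move=> y; apply: (lin_0 (LR y)).
have mu0 : mu 0 = 0 by apply: lin_0 muL.
have brg0 : forall x, brg 0 x = 0 by move=> x; apply: (lin_0 (fun a u v => gL a u v x)).
have brh0 : forall y, brh y 0 = 0 by move=> y; apply: (lin_0 (fun a u v => bR a u v y)).
have o0 : forall y, omega y 0 = 0 by move=> y; apply: (@lin_0 R h R^o _ (fun a u v => oR' a u v y)).
have o0' : forall y, omega 0 y = 0 by move=> y; apply: ((@lin_0 R h R^o _ (fun a u v => oL' a u v y))).
have oN : forall u v, omega u (- v) = - omega u v by move=> u; apply: (@lin_N R h R^o _ (fun a u' v => oR' a u' v u)).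
have oNl : forall u v, omega (- u) v = - omega u v by move=> u v; rewrite oanti oN oanti opprK.
have phN : forall p, phi (- p) = - phi p.
  by apply: (lin_N (f := phi : _ -> R^o)) => *; apply: phL.
split=> //; split.
  split.
  - by move=> a u v w; rewrite /omega_bracket /= bL oL; apply: injective_projections => /=; rewrite ?opprD ?scalerN.
  - by move=> a u v w; rewrite /omega_bracket /= bR oR; apply: injective_projections => /=; rewrite ?opprD ?scalerN.
  - by move=> u; rewrite /omega_bracket bA oA oppr0.
  - move=> u v w; rewrite /omega_bracket /=; apply: injective_projections => /=; first exact: bJ.
    have E := H1 u.1 v.1 w.1.
    rewrite (oanti u.1) (oanti v.1) (oanti w.1) (banti w.1 u.1) oNl.
    lra.
split.
  move=> a x x'; rewrite /mu_phi muL; congr pair.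
  rewrite -phL; congr phi; apply: injective_projections => /=; first by [].
  by rewrite scaler0 addr0.
split.
  move=> x x'; rewrite /mu_phi /omega_bracket /= muB; congr pair.
  have := H3 x x' 0 0; rewrite /semidirect_bracket /= !add0r o0 !L0 brh0 ?subr0 ?addr0 ?sub0r.
  by move=> <-.
split; first by move=> a p p' x; rewrite /omega_action; apply: LL.
split; first by move=> p a x x'; rewrite /omega_action; apply: LR.
split; first by move=> p x x'; rewrite /omega_action; apply: LD.
split; first by move=> p p' x; rewrite /omega_action; apply: LB.
split; last by move=> x0 x1; rewrite /omega_action /mu_phi /=; apply: Lp.
move=> y x; rewrite /mu_phi /omega_bracket /omega_action /=; congr pair; first exact: Leq.
have := H3 0 x y.1 0; rewrite /semidirect_bracket /= mu0 !addr0 ?add0r o0 brg0 ?add0r !Lx0 ?subr0 brh0 ?sub0r.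
by move=> <-.
Qed.
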